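(* Let $m\ge2$ be even, $n\ge2$, and let $g,h\in\mathbb{R}$ with $h\neq0$ and $g/h\notin\mathbb{Z}$. Let $\mathcal{A}$ be the Cauchy-Hankel tensor of order $m$ and dimension $n$ with entries $a_{i_1\cdots i_m}=\frac{1}{g+h(i_1+\cdots+i_m)}$, and let $f(x)=\mathcal{A}x^m$. Then $\mathcal{A}$ is positive definite if and only if $f$ is strictly monotonically increasing on $\mathbb{R}^n_+$.
   Context: $\mathcal{A}x^m=\sum_{i_1,\dots,i_m}a_{i_1\cdots i_m}x_{i_1}\cdots x_{i_m}$. Positive definite: $\mathcal{A}x^m>0$ for all nonzero $x\in\mathbb{R}^n$. $\mathbb{R}^n_+=\{x\in\mathbb{R}^n: x_i\ge0\ \forall i\}$; for vectors, $x\ge y$ means $x_i\ge y_i$ for all $i$. $f$ is strictly monotonically increasing on $\mathbb{R}^n_+$ if $f(x)>f(y)$ for all $x,y\in\mathbb{R}^n_+$ with $x\ge y$ and $x\neq y$. *)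

(* Defs.v *)
From Stdlib Require Import Reals List ZArith Arith.
Open Scope R_scope.

(* Vectors in R^n are functions nat -> R, with coordinates x 1, ..., x n
   (1-indexed, as in the paper). Tensor entries are indexed by lists
   [i_1; ...; i_m] of indices in {1,...,n}. *)

Fixpoint rsum (n : nat) (f : nat -> R) : R :=
  match n with
  | O => 0
  | S k => rsum k f + f (S k)
  end.

Fixpoint tsum (n m : nat) (F : list nat -> R) : R :=
  match m with
  | O => F nil
  | S k => rsum n (fun i => tsum n k (fun l => F (i :: l)))
  end.

Definition tensor := list nat -> R.

Definition xprod (x : nat -> R) (l : list nat) : R :=
  fold_right (fun i acc => x i * acc) 1 l.

Definition tform (n m : nat) (A : tensor) (x : nat -> R) : R :=
  tsum n m (fun l => A l * xprod x l).

Definition cauchy_hankel (g h : R) : tensor :=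
  fun l => / (g + h * INR (list_sum l)).

Definition nonzero_vec (n : nat) (x : nat -> R) : Prop :=
  exists i, (1 <= i <= n)%nat /\ x i <> 0.

Definition positive_definite (n m : nat) (A : tensor) : Prop :=
  forall x : nat -> R, nonzero_vec n x -> tform n m A x > 0.

Definition nonneg_vec (n : nat) (x : nat -> R) : Prop :=
  forall i, (1 <= i <= n)%nat -> 0 <= x i.

Definition vge (n : nat) (x y : nat -> R) : Prop :=
  forall i, (1 <= i <= n)%nat -> y i <= x i.

Definition vneq (n : nat) (x y : nat -> R) : Prop :=
  exists i, (1 <= i <= n)%nat /\ x i <> y i.

Definition strictly_increasing_on_nonneg (n : nat) (f : (nat -> R) -> R) : Prop :=
  forall x y : nat -> R, nonneg_vec n x -> nonneg_vec n y ->
    vge n x y -> vneq n x y -> f x > f y.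

(* Main.v *)
Require Import Defs.
From Stdlib Require Import Reals List ZArith Arith Lra Lia Psatz Classical.
Open Scope R_scope.

Lemma rsum_ext n f g : (forall i, (1 <= i <= n)%nat -> f i = g i) -> rsum n f = rsum n g.
Proof. induction n; simpl; intros H; auto. rewrite IHn, H; [auto|lia|intros; apply H; lia]. Qed.

Lemma rsum_plus n f g : rsum n (fun i => f i + g i) = rsum n f + rsum n g.
Proof. induction n; simpl; [lra|rewrite IHn; lra]. Qed.

Lemma rsum_minus n f g : rsum n (fun i => f i - g i) = rsum n f - rsum n g.
Proof. induction n; simpl; [lra|rewrite IHn; lra]. Qed.

Lemma rsum_scal n c f : rsum n (fun i => c * f i) = c * rsum n f.
Proof. induction n; simpl; [lra|rewrite IHn; lra]. Qed.

Lemma rsum_zero n : rsum n (fun _ => 0) = 0.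
Proof. induction n; simpl; [lra|rewrite IHn; lra]. Qed.

Lemma rsum_swap n N F : rsum n (fun i => rsum N (fun s => F i s)) = rsum N (fun s => rsum n (fun i => F i s)).
Proof. induction n; simpl. rewrite rsum_zero; auto. rewrite IHn, <- rsum_plus; auto. Qed.

Lemma rsum_nonneg n f : (forall i, (1 <= i <= n)%nat -> 0 <= f i) -> 0 <= rsum n f.
Proof. induction n; simpl; intros H; [lra|]. assert (0 <= f (S n)) by (apply H; lia).
 assert (0 <= rsum n f) by (apply IHn; intros; apply H; lia). lra. Qed.

Lemma rsum_ge_term n f p : (forall i, (1 <= i <= n)%nat -> 0 <= f i) -> (1 <= p <= n)%nat -> f p <= rsum n f.
Proof. induction n; simpl; intros H Hp; [lia|].
 destruct (Nat.eq_dec p (S n)). subst. assert (0 <= rsum n f) by (apply rsum_nonneg; intros; apply H; lia). lra.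
 assert (f p <= rsum n f) by (apply IHn; [intros; apply H|]; lia). assert (0 <= f (S n)) by (apply H; lia). lra. Qed.

Lemma rsum_ind N p v : (1 <= p <= N)%nat -> rsum N (fun s => if Nat.eqb p s then v s else 0) = v p.
Proof. induction N; intros Hp; [lia|]. simpl.
 destruct (Nat.eq_dec p (S N)). subst. rewrite Nat.eqb_refl.
 rewrite (rsum_ext _ _ (fun _ => 0)). rewrite rsum_zero; lra.
 intros i Hi. destruct (Nat.eqb_spec (S N) i); auto; lia.
 rewrite IHN by lia. destruct (Nat.eqb_spec p (S N)); [lia|lra]. Qed.

Definition inrange n (l : list nat) := Forall (fun i => (1 <= i <= n)%nat) l.

Lemma tsum_ext n m F G : (forall l, length l = m -> inrange n l -> F l = G l) -> tsum n m F = tsum n m G.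
Proof. revert F G; induction m; simpl; intros F G H.
 apply H; auto. constructor.
 apply rsum_ext; intros i Hi. apply IHm. intros l Hl Hr. apply H; simpl; auto. constructor; auto. Qed.

Lemma tsum_fun_ext n m F G : (forall l, F l = G l) -> tsum n m F = tsum n m G.
Proof. intros; apply tsum_ext; auto. Qed.

Lemma tsum_plus n m F G : tsum n m (fun l => F l + G l) = tsum n m F + tsum n m G.
Proof. revert F G; induction m; simpl; intros; auto.
 rewrite <- rsum_plus. apply rsum_ext; intros. apply IHm. Qed.

Lemma tsum_minus n m F G : tsum n m (fun l => F l - G l) = tsum n m F - tsum n m G.
Proof. revert F G; induction m; simpl; intros; auto.
 rewrite <- rsum_minus. apply rsum_ext; intros. apply IHm. Qed.

Lemma tsum_scal n m c F : tsum n m (fun l => c * F l) = c * tsum n m F.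
Proof. revert F; induction m; simpl; intros; auto.
 rewrite <- rsum_scal. apply rsum_ext; intros. apply IHm. Qed.

Lemma tsum_zero n m : tsum n m (fun _ => 0) = 0.
Proof. induction m; simpl; auto. rewrite (rsum_ext _ _ (fun _ => 0)). apply rsum_zero. intros; apply IHm. Qed.

Lemma tsum_nonneg n m F : (forall l, length l = m -> inrange n l -> 0 <= F l) -> 0 <= tsum n m F.
Proof. revert F; induction m; simpl; intros F H.
 apply H; auto; constructor.
 apply rsum_nonneg; intros i Hi. apply IHm. intros l Hl Hr; apply H; simpl; auto; constructor; auto. Qed.

Lemma tsum_ge_term n m F l0 : (forall l, length l = m -> inrange n l -> 0 <= F l) ->
  length l0 = m -> inrange n l0 -> F l0 <= tsum n m F.
Proof. revert F l0; induction m; simpl; intros F l0 H Hl Hr.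
 destruct l0; simpl in Hl; try lia. lra.
 destruct l0 as [|i l0]; simpl in Hl; [lia|]. inversion Hr; subst.
 eapply Rle_trans; [|apply rsum_ge_term with (p := i); auto].
 apply (IHm (fun l => F (i :: l))); auto.
 intros l Hl' Hr'; apply H; simpl; auto; constructor; auto.
 intros j Hj. apply tsum_nonneg. intros l Hl' Hr'; apply H; simpl; auto; constructor; auto. Qed.

Lemma tsum_app n a b F : tsum n (a + b) F = tsum n a (fun l1 => tsum n b (fun l2 => F (l1 ++ l2))).
Proof. revert F; induction a; simpl; intros; auto. apply rsum_ext; intros. apply IHa. Qed.

Lemma tsum_rsum_swap n k N F : tsum n k (fun l => rsum N (fun s => F l s)) = rsum N (fun s => tsum n k (fun l => F l s)).
Proof. revert F; induction k; simpl; intros; auto.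
 rewrite <- rsum_swap. apply rsum_ext; intros. apply IHk. Qed.

Lemma tsum_prod n k y : tsum n k (xprod y) = rsum n y ^ k.
Proof. induction k; simpl; auto.
 rewrite (rsum_ext _ _ (fun i => y i * rsum n y ^ k)). rewrite Rmult_comm. rewrite <- (rsum_scal n (rsum n y ^ k) y).
 apply rsum_ext; intros; lra.
 intros i Hi. unfold xprod at 1. simpl. rewrite <- IHk. rewrite <- tsum_scal. reflexivity. Qed.

Definition QF N (a q : nat -> R) := rsum N (fun j => rsum N (fun k => q j * q k / (a j + a k))).

Lemma dsplit N F : rsum (S N) (fun j => rsum (S N) (fun k => F j k)) =
  rsum N (fun j => rsum N (fun k => F j k)) + rsum N (fun j => F j (S N)) + rsum N (fun k => F (S N) k) + F (S N) (S N).
Proof. simpl. rewrite (rsum_plus N (fun j => rsum N (fun k => F j k)) (fun j => F j (S N))). lra. Qed.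

Lemma dsquare N u : rsum N (fun j => rsum N (fun k => u j * u k)) = rsum N u * rsum N u.
Proof. rewrite (rsum_ext _ _ (fun j => rsum N u * u j)). rewrite rsum_scal. lra.
 intros j _. rewrite rsum_scal; lra. Qed.

Lemma cauchy N : forall a q : nat -> R,
 (forall j, (1<=j<=N)%nat -> q j <> 0 -> a j > 0) ->
 (forall j k, (1<=j<=N)%nat -> (1<=k<=N)%nat -> a j = a k -> j = k) ->
 0 <= QF N a q /\ ((exists j, (1<=j<=N)%nat /\ q j <> 0) -> QF N a q > 0).
Proof.
 induction N; intros a q Hpos Hinj.
 { unfold QF; simpl; split; [lra|]. intros [j [Hj _]]; lia. }
 unfold QF. rewrite dsplit.
 destruct (Req_dec (q (S N)) 0) as [Hq|Hq].
 - rewrite (rsum_ext _ (fun j => q j * q (S N) / (a j + a (S N))) (fun _ => 0)) by (intros; rewrite Hq; unfold Rdiv; ring).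
   rewrite (rsum_ext _ (fun k => q (S N) * q k / (a (S N) + a k)) (fun _ => 0)) by (intros; rewrite Hq; unfold Rdiv; ring).
   rewrite rsum_zero, Hq. replace (0*0/(a (S N) + a (S N))) with 0 by (unfold Rdiv; ring).
   destruct (IHN a q) as [H1 H2]. intros; apply Hpos; auto; lia. intros; apply Hinj; auto; lia.
   unfold QF in H1, H2. split. lra. intros [j [Hj Hqj]]. assert (j <> S N) by (intro; subst; tauto).
   assert (rsum N (fun j0 => rsum N (fun k => q j0 * q k / (a j0 + a k))) > 0) by (apply H2; exists j; split; auto; lia). lra.
 - set (A := a (S N)). assert (HA : A > 0) by (apply Hpos; auto; lia).
   set (q' := fun j => q j * (a j - A) / (a j + A)).
   set (u := fun j => q j * (2 * A / (A + a j))).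
   assert (E1 : forall j k, (1<=j<=N)%nat -> (1<=k<=N)%nat -> q j * q k / (a j + a k) = u j * u k / (2*A) + q' j * q' k / (a j + a k)).
   { intros j k Hj Hk. unfold u, q'.
     destruct (Req_dec (q j) 0) as [Hj0|Hj0]. rewrite Hj0; unfold Rdiv; ring.
     destruct (Req_dec (q k) 0) as [Hk0|Hk0]. rewrite Hk0; unfold Rdiv; ring.
     assert (a j > 0) by (apply Hpos; auto; lia). assert (a k > 0) by (apply Hpos; auto; lia).
     field. lra. }
   assert (E2 : forall j, (1<=j<=N)%nat -> q j * q (S N) / (a j + A) = u j * u (S N) / (2*A)).
   { intros j Hj. unfold u. fold A. destruct (Req_dec (q j) 0) as [Hj0|Hj0]. rewrite Hj0; unfold Rdiv; ring.
     assert (a j > 0) by (apply Hpos; auto; lia). field. lra. }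
   assert (E3 : forall k, (1<=k<=N)%nat -> q (S N) * q k / (A + a k) = u (S N) * u k / (2*A)).
   { intros k Hk. unfold u. fold A. destruct (Req_dec (q k) 0) as [Hj0|Hj0]. rewrite Hj0; unfold Rdiv; ring.
     assert (a k > 0) by (apply Hpos; auto; lia). field. lra. }
   assert (E4 : q (S N) * q (S N) / (A + A) = u (S N) * u (S N) / (2*A)).
   { unfold u. fold A. field. lra. }
   rewrite (rsum_ext _ _ _ E2), (rsum_ext _ _ _ E3), E4.
   rewrite (rsum_ext _ _ (fun j => rsum N (fun k => u j * u k / (2*A)) + rsum N (fun k => q' j * q' k / (a j + a k)))).
   2:{ intros j Hj. rewrite <- rsum_plus. apply rsum_ext; intros; apply E1; auto. }
   rewrite rsum_plus.
   assert (EU : rsum N (fun j => rsum N (fun k => u j * u k / (2 * A))) + rsum N (fun j => u j * u (S N) / (2 * A)) +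
     rsum N (fun k => u (S N) * u k / (2 * A)) + u (S N) * u (S N) / (2 * A) = (rsum (S N) u)^2 / (2*A)).
   { rewrite <- (dsplit N (fun j k => u j * u k / (2*A))).
     rewrite (rsum_ext _ _ (fun j => / (2*A) * rsum (S N) (fun k => u j * u k))).
     rewrite rsum_scal, dsquare. unfold Rdiv; ring.
     intros; rewrite <- rsum_scal; apply rsum_ext; intros; unfold Rdiv; ring. }
   destruct (IHN a q') as [H1 H2].
   { intros j Hj Hq'. apply Hpos; [lia|]. intro Hz; apply Hq'; unfold q'; rewrite Hz; unfold Rdiv; ring. }
   { intros; apply Hinj; auto; lia. }
   unfold QF in H1, H2.
   assert (HL : 0 <= (rsum (S N) u)^2 / (2*A)). { apply Rmult_le_pos. nra. left; apply Rinv_0_lt_compat; lra. }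
   split. lra. intros _.
   destruct (Rle_or_lt (rsum N (fun j => rsum N (fun k => q' j * q' k / (a j + a k)))) 0) as [Hle|Hlt].
   2: lra.
   assert (Hz : forall j, (1<=j<=N)%nat -> q j = 0).
   { intros j Hj. destruct (Req_dec (q j) 0) as [|Hj0]; auto. exfalso.
     assert (a j > 0) by (apply Hpos; auto; lia).
     assert (a j <> A). { intro E. assert (j = S N) by (apply Hinj; auto; lia). lia. }
     assert (q' j <> 0). { unfold q'. intro E. apply Rmult_integral in E as [E|E].
       apply Rmult_integral in E as [E|E]; [tauto|lra]. apply Rinv_neq_0_compat in E; auto; lra. }
     assert (rsum N (fun j => rsum N (fun k => q' j * q' k / (a j + a k))) > 0) by (apply H2; exists j; auto). lra. }
   assert (Hs : rsum (S N) u = q (S N)).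
   { simpl. rewrite (rsum_ext _ _ (fun _ => 0)), rsum_zero. unfold u; fold A; field; lra.
     intros j Hj; unfold u; rewrite Hz; auto; ring. }
   rewrite Hs in EU. assert (0 < q (S N) ^ 2 / (2*A)). { apply Rdiv_lt_0_compat. assert (0 < q (S N) * q (S N)) by (apply Rsqr_pos_lt; auto). simpl; lra. lra. }
   lra.
Qed.

Lemma pow_ne0 x k : x <> 0 -> x ^ k <> 0.
Proof. intros H; induction k; simpl. lra. intro E; apply Rmult_integral in E as [E|E]; tauto. Qed.

Lemma pow_strict x y k : (1 <= k)%nat -> 0 <= y < x -> y ^ k < x ^ k.
Proof. intros Hk Hy; induction k; [lia|]. simpl. destruct k. simpl; lra.
 assert (y ^ S k < x ^ S k) by (apply IHk; lia). assert (0 <= y ^ S k) by (apply pow_le; lra). nra. Qed.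

Lemma xprod_app x l1 l2 : xprod x (l1 ++ l2) = xprod x l1 * xprod x l2.
Proof. induction l1; simpl. ring. unfold xprod in *; simpl. rewrite IHl1; ring. Qed.

Lemma xprod_cons x j l : xprod x (j :: l) = x j * xprod x l.
Proof. reflexivity. Qed.

Lemma xprod_mono x y n l : nonneg_vec n y -> vge n x y -> inrange n l -> 0 <= xprod y l <= xprod x l.
Proof. intros Hy Hxy; induction l; intros Hr. simpl; lra. inversion Hr; subst.
 rewrite !xprod_cons. specialize (IHl H2). specialize (Hy a H1). specialize (Hxy a H1). split; nra. Qed.

Lemma xprod_repeat x i k : xprod x (repeat i k) = x i ^ k.
Proof. induction k; simpl; auto. rewrite <- IHk; reflexivity. Qed.

Lemma xprod_zero_in x l j : In j l -> x j = 0 -> xprod x l = 0.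
Proof. induction l; intros H Hz; simpl in H; [tauto|]. rewrite xprod_cons. destruct H. subst; rewrite Hz; ring.
 rewrite IHl; auto; ring. Qed.

Lemma xprod_ext x y l : (forall j, In j l -> x j = y j) -> xprod x l = xprod y l.
Proof. induction l; intros H; [reflexivity|]. rewrite !xprod_cons, H, IHl; auto; [intros; apply H|]; simpl; auto. Qed.

Lemma sum_bounds n l : inrange n l -> (length l <= list_sum l <= length l * n)%nat.
Proof. induction l; simpl; intros Hr. lia. inversion Hr; subst. specialize (IHl H2). lia. Qed.

Lemma inrange_app n l1 l2 : inrange n l1 -> inrange n l2 -> inrange n (l1 ++ l2).
Proof. intros; apply Forall_app; auto. Qed.

Lemma inrange_repeat n i k : (1 <= i <= n)%nat -> inrange n (repeat i k).
Proof. intros H. apply Forall_forall. intros j Hj. apply repeat_spec in Hj; subst; auto. Qed.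

Definition indb (b : bool) : R := if b then 1 else 0.

Lemma group n k N G psi : (1 <= k)%nat -> (k * n <= N)%nat ->
  tsum n k (fun l => G l * psi (list_sum l)) =
  rsum N (fun s => psi s * tsum n k (fun l => G l * indb (Nat.eqb (list_sum l) s))).
Proof. intros Hk HN.
 rewrite (tsum_ext _ _ _ (fun l => rsum N (fun s => G l * (if Nat.eqb (list_sum l) s then psi s else 0)))).
 rewrite tsum_rsum_swap. apply rsum_ext; intros s _. rewrite <- tsum_scal. apply tsum_fun_ext; intros l.
 unfold indb; destruct (Nat.eqb (list_sum l) s); ring.
 intros l Hl Hr. rewrite rsum_scal. rewrite rsum_ind; auto. apply sum_bounds in Hr. rewrite Hl in Hr.
 split; [lia|]. apply Nat.le_trans with (k*n)%nat; lia. Qed.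

Lemma den_pos m n g h s : g + h * INR m > 0 -> g + h * INR (m * n) > 0 -> (m <= s <= m * n)%nat -> g + h * INR s > 0.
Proof. intros H1 H2 Hs. assert (INR m <= INR s) by (apply le_INR; lia).
 assert (INR s <= INR (m*n)) by (apply le_INR; lia). destruct (Rle_or_lt 0 h); nra. Qed.

Definition evec (i : nat) : nat -> R := fun j => if Nat.eqb i j then 1 else 0.

Lemma xprod_evec i l : xprod (evec i) l = 0 \/ list_sum l = (length l * i)%nat.
Proof. induction l. right; simpl; lia. rewrite xprod_cons. simpl list_sum; simpl length. unfold evec at 1.
 destruct (Nat.eqb_spec i a). subst. destruct IHl as [E|E]. left; rewrite E; ring. right; lia.
 left; ring. Qed.

Lemma tform_evec m n g h i : (1 <= i <= n)%nat ->
  tform n m (cauchy_hankel g h) (evec i) = / (g + h * INR (m * i)).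
Proof. intros Hi. unfold tform.
 rewrite (tsum_ext _ _ _ (fun l => / (g + h * INR (m * i)) * xprod (evec i) l)).
 rewrite tsum_scal, tsum_prod. unfold evec. rewrite (rsum_ind n i (fun _ => 1)); auto. rewrite pow1; ring.
 intros l Hl _. unfold cauchy_hankel. destruct (xprod_evec i l) as [E|E]. rewrite E; ring. rewrite E, Hl; ring. Qed.

Lemma tform_zero m n A : (1 <= m)%nat -> tform n m A (fun _ => 0) = 0.
Proof. intros Hm. unfold tform. rewrite (tsum_ext _ _ _ (fun _ => 0)). apply tsum_zero.
 intros l Hl _. destruct l; simpl in Hl. lia. rewrite xprod_cons; ring. Qed.

Lemma inv_pos_rev x : / x > 0 -> x > 0.
Proof. intros H. destruct (Rtotal_order x 0) as [H0|[H0|H0]]; auto.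
 apply Rinv_lt_0_compat in H0; lra. subst; rewrite Rinv_0 in H; lra. Qed.

Lemma sum_ge i0 l : (forall j, In j l -> (i0 <= j)%nat) ->
  (length l * i0 <= list_sum l)%nat /\ ((exists j, In j l /\ j <> i0) -> (length l * i0 < list_sum l)%nat).
Proof. induction l; simpl; intros H. split; [lia|]. intros [j [[] _]].
 destruct IHl as [H1 H2]. intros; apply H; auto. assert (i0 <= a)%nat by (apply H; auto).
 split. lia. intros [j [[E|Hj] Hne]]. subst; lia. assert (length l * i0 < list_sum l)%nat by (apply H2; eauto). lia. Qed.

Lemma sum_eq i0 l : (forall j, In j l -> j = i0) -> list_sum l = (length l * i0)%nat.
Proof. induction l; simpl; intros H. lia. rewrite IHl by auto. rewrite (H a) by auto. lia. Qed.

Lemma coef_min x i0 l :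
  (forall j, (1 <= j < i0)%nat -> x j = 0) -> Forall (fun j => (1 <= j)%nat) l ->
  xprod x l * indb (Nat.eqb (list_sum l) (length l * i0)) = xprod (fun j => if Nat.eqb i0 j then x j else 0) l.
Proof. intros Hx Hr.
 destruct (classic (exists j, In j l /\ (j < i0)%nat)) as [[j [Hj Hlt]]|Hn].
 { assert (1 <= j)%nat by (rewrite Forall_forall in Hr; auto).
   rewrite (xprod_zero_in x l j), (xprod_zero_in _ l j); auto; [ring|].
   destruct (Nat.eqb_spec i0 j); [lia|auto]. }
 assert (Hge : forall j, In j l -> (i0 <= j)%nat). { intros j Hj. destruct (Nat.le_gt_cases i0 j); auto. exfalso; eauto. }
 destruct (classic (exists j, In j l /\ j <> i0)) as [[j [Hj Hne]]|Hn2].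
 { destruct (sum_ge i0 l Hge) as [_ H2]. assert (length l * i0 < list_sum l)%nat by (apply H2; eauto).
   destruct (Nat.eqb_spec (list_sum l) (length l * i0)); [lia|]. unfold indb.
   rewrite (xprod_zero_in (fun j => if Nat.eqb i0 j then x j else 0) l j); auto; [ring|]. destruct (Nat.eqb_spec i0 j); [lia|auto]. }
 assert (Heq : forall j, In j l -> j = i0). { intros j Hj. destruct (Nat.eq_dec j i0); auto. exfalso; eauto. }
 rewrite (sum_eq i0 l Heq). rewrite Nat.eqb_refl. unfold indb. rewrite Rmult_1_r. apply xprod_ext.
 intros j Hj. rewrite (Heq j Hj), Nat.eqb_refl. auto. Qed.

Lemma min_index x p : (exists j, (1 <= j <= p)%nat /\ x j <> 0) ->
  exists i0, (1 <= i0 <= p)%nat /\ x i0 <> 0 /\ forall j, (1 <= j < i0)%nat -> x j = 0.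
Proof. induction p; intros [j [Hj Hx]]. lia.
 destruct (classic (exists j, (1 <= j <= p)%nat /\ x j <> 0)) as [He|Hn].
 destruct (IHp He) as [i0 [H1 [H2 H3]]]. exists i0; split; auto; lia.
 exists (S p). split; [lia|]. split.
 assert (j = S p). { destruct (Nat.eq_dec j (S p)); auto. exfalso; apply Hn; exists j; split; auto; lia. } subst; auto.
 intros j' Hj'. destruct (Req_dec (x j') 0); auto. exfalso; apply Hn; exists j'; split; auto; lia. Qed.

Lemma pd_main m n g h k : m = (k + k)%nat -> (1 <= k)%nat -> (1 <= n)%nat -> h <> 0 ->
  g + h * INR m > 0 -> g + h * INR (m * n) > 0 ->
  forall x, nonzero_vec n x -> tform n m (cauchy_hankel g h) x > 0.
Proof.
 intros Hm Hk Hn Hh H1 H2 x Hx.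
 set (N := (k * n)%nat).
 set (c := fun t => tsum n k (fun l => xprod x l * indb (Nat.eqb (list_sum l) t))).
 set (K := fun s t => / (g + h * (INR s + INR t))).
 set (psi := fun s => rsum N (fun t => K s t * c t)).
 set (a := fun j => g / 2 + h * INR j).
 assert (Eq : tform n m (cauchy_hankel g h) x = QF N a c).
 { unfold tform. rewrite Hm, tsum_app.
   rewrite (tsum_ext _ _ _ (fun l1 => xprod x l1 * psi (list_sum l1))).
   2:{ intros l1 _ _. rewrite (tsum_fun_ext _ _ _ (fun l2 => xprod x l1 * (xprod x l2 * K (list_sum l1) (list_sum l2)))).
       rewrite tsum_scal. f_equal. unfold psi. rewrite (group n k N (xprod x) (K (list_sum l1))); auto.
       intros l2. unfold cauchy_hankel, K. rewrite list_sum_app, plus_INR, xprod_app. ring. }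
   rewrite (group n k N (xprod x) psi); auto.
   unfold QF. apply rsum_ext; intros s _. unfold psi. rewrite Rmult_comm, <- rsum_scal. apply rsum_ext; intros t _.
   unfold K, a. replace (g / 2 + h * INR s + (g / 2 + h * INR t)) with (g + h * (INR s + INR t)) by field.
   fold (c s). unfold Rdiv; ring. }
 rewrite Eq. apply (cauchy N a c).
 - intros j Hj Hc. destruct (classic (k <= j <= k * n)%nat) as [Hr|Hr].
   + unfold a. assert (g + h * INR (j + j) > 0).
     { apply (den_pos m n); auto. subst m; nia. }
     rewrite plus_INR in H. lra.
   + exfalso; apply Hc. unfold c. rewrite (tsum_ext _ _ _ (fun _ => 0)). apply tsum_zero.
     intros l Hl Hrl. apply sum_bounds in Hrl. rewrite Hl in Hrl.
     destruct (Nat.eqb_spec (list_sum l) j). lia. unfold indb; ring.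
 - intros j j' _ _ E. unfold a in E. apply INR_eq. apply (Rmult_eq_reg_l h); auto. lra.
 - destruct Hx as [j [Hj Hxj]].
   destruct (min_index x n) as [i0 [Hi0 [Hx0 Hmin]]]. exists j; auto.
   exists (k * i0)%nat. split. unfold N; nia.
   unfold c. rewrite (tsum_ext _ _ _ (xprod (fun j => if Nat.eqb i0 j then x j else 0))).
   rewrite tsum_prod. rewrite (rsum_ind n i0 x); auto. apply pow_ne0; auto.
   intros l Hl Hr. rewrite <- Hl. apply coef_min; auto.
   eapply Forall_impl; [|exact Hr]. simpl; intros; lia.
Qed.

Lemma mono_main m n g h : (1 <= m)%nat ->
  (forall l, length l = m -> inrange n l -> cauchy_hankel g h l > 0) ->
  strictly_increasing_on_nonneg n (tform n m (cauchy_hankel g h)).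
Proof.
 intros Hm Hden x y Hx Hy Hxy [i [Hi Hne]].
 apply Rminus_gt_0_lt. unfold tform. rewrite <- tsum_minus.
 rewrite (tsum_fun_ext _ _ _ (fun l => cauchy_hankel g h l * (xprod x l - xprod y l))) by (intros; ring).
 apply Rlt_le_trans with (cauchy_hankel g h (repeat i m) * (xprod x (repeat i m) - xprod y (repeat i m))).
 - rewrite !xprod_repeat. apply Rmult_lt_0_compat. apply Hden. apply repeat_length. apply inrange_repeat; auto.
   assert (y i ^ m < x i ^ m). { apply pow_strict; auto. specialize (Hy i Hi). specialize (Hxy i Hi). split; auto. lra. } lra.
 - apply (tsum_ge_term n m (fun l => cauchy_hankel g h l * (xprod x l - xprod y l)) (repeat i m)). intros l Hl Hr. pose proof (xprod_mono x y n l Hy Hxy Hr). pose proof (Hden l Hl Hr). nra.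
   apply repeat_length. apply inrange_repeat; auto.
Qed.

Theorem theorem5p2 (m n : nat) (g h : R) :
  (2 <= m)%nat -> Nat.Even m -> (2 <= n)%nat ->
  h <> 0 -> (forall z : Z, g / h <> IZR z) ->
  (positive_definite n m (cauchy_hankel g h) <->
   strictly_increasing_on_nonneg n (tform n m (cauchy_hankel g h))).
Proof.
 intros Hm [k Hk] Hn Hh _.
 assert (Hm' : m = (k + k)%nat) by lia.
 assert (Hkp : (1 <= k)%nat) by lia.
 assert (Hden : g + h * INR m > 0 -> g + h * INR (m * n) > 0 ->
   forall l, length l = m -> inrange n l -> cauchy_hankel g h l > 0).
 { intros H1 H2 l Hl Hr. unfold cauchy_hankel. apply Rinv_0_lt_compat.
   apply (den_pos m n); auto. apply sum_bounds in Hr. rewrite Hl in Hr; lia. }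
 assert (Hnz : forall i, (1 <= i <= n)%nat -> nonzero_vec n (evec i)).
 { intros i Hi. exists i; split; auto. unfold evec; rewrite Nat.eqb_refl; lra. }
 split.
 - intros Hpd.
   assert (H1 : g + h * INR (m * 1) > 0). { apply inv_pos_rev. rewrite <- (tform_evec m n) by lia. apply Hpd, Hnz; lia. }
   assert (H2 : g + h * INR (m * n) > 0). { apply inv_pos_rev. rewrite <- (tform_evec m n) by lia. apply Hpd, Hnz; lia. }
   rewrite Nat.mul_1_r in H1. apply mono_main; auto; lia.
 - intros Hmono.
   assert (Hev : forall i, (1 <= i <= n)%nat -> g + h * INR (m * i) > 0).
   { intros i Hi. apply inv_pos_rev. rewrite <- (tform_evec m n) by auto.
     rewrite <- (tform_zero m n (cauchy_hankel g h)) by lia. apply Hmono.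
     intros j _; unfold evec; destruct (Nat.eqb i j); lra.
     intros j _; lra.
     intros j _; unfold evec; destruct (Nat.eqb i j); lra.
     exists i; split; auto. unfold evec; rewrite Nat.eqb_refl; lra. }
   assert (H1 := Hev 1%nat ltac:(lia)). rewrite Nat.mul_1_r in H1.
   intros x Hx. apply (pd_main m n g h k); auto; try lia. apply Hev; lia.
Qed.
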